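(* Let $\{X_1,X_2,\dots\}$ be a random dense countable subset of $(0,1)$ satisfying the independence condition and such that for every Borel set $B\subset(0,1)$ of Lebesgue measure $0$, $B\cap\{X_1,X_2,\dots\}=\emptyset$ a.s. If $\Pr(X_k=X_l)=0$ whenever $k\ne l$, then for every $n$ the joint distribution of $(X_1,\dots,X_n)$ is absolutely continuous with respect to Lebesgue measure on $(0,1)^n$.
   Context: A random countable subset of $(0,1)$ is given by random variables $X_1,X_2,\dots:\Omega\to(0,1)$ on a probability space, the set being $\omega\mapsto\{X_1(\omega),X_2(\omega),\dots\}$. It is dense if this set is dense in $(0,1)$ for a.e. $\omega$. Two random countable sets $\{X_k\},\{Y_k\}$ are identically distributed if some probability measure on $(0,1)^\infty\times(0,1)^\infty$ has marginals the laws of $(X_k)_k$ and $(Y_k)_k$ and is concentrated on pairs $(x,y)$ with $\{x_1,x_2,\dots\}=\{y_1,y_2,\dots\}$. Independence condition. For every $n\ge2$ and every $0=a_0<\dots<a_n=1$ there exist random variables $Y_{i,j}$ ($i\le n$, $j\ge1$) on some probability space such that: - $\{Y_{i,j}\}$ is distributed like $\{X_k\}$; - $Y_{i,j}\in[a_{i-1},a_i)$ a.s.; - the sequences $(Y_{i,j})_j$ are independent. *)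

(* Defs.v *)
From HB Require Import structures.
From mathcomp Require Import all_boot all_order all_algebra.
From mathcomp Require Import all_classical all_reals all_analysis.
Set Implicit Arguments. Unset Strict Implicit. Unset Printing Implicit Defensive.
Import Order.TTheory GRing.Theory Num.Theory.
Local Open Scope classical_set_scope.
Local Open Scope ring_scope.

Definition Rseq (R : realType) : Type := nat -> R.
HB.instance Definition _ (R : realType) := gen_eqMixin (Rseq R).
HB.instance Definition _ (R : realType) := gen_choiceMixin (Rseq R).
HB.instance Definition _ (R : realType) := isPointed.Build (Rseq R) (fun _ => 0%R).

Definition seq_measurable (R : realType) : set (set (Rseq R)) :=
  <<s \bigcup_(k in [set: nat])
        preimage_set_system [set: Rseq R] (fun x : Rseq R => x k)
          (measurable : set (set R)) >>.
Arguments seq_measurable : clear implicits.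

Section seq_measurable_instance.
Variable R : realType.
Let s0 : seq_measurable R set0. Proof. exact: sigma_algebra0. Qed.
Let sC A : seq_measurable R A -> seq_measurable R (~` A).
Proof. exact: sigma_algebraC. Qed.
Let sU (F : (set (Rseq R))^nat) : (forall i, seq_measurable R (F i)) ->
  seq_measurable R (\bigcup_i F i).
Proof. exact: sigma_algebra_bigcup. Qed.
HB.instance Definition _ := @isMeasurable.Build default_measure_display
  (Rseq R) (seq_measurable R) s0 sC sU.
End seq_measurable_instance.

(* Identically distributed random countable sets: a coupling of the laws of
   the two sequences, concentrated on pairs of sequences with equal ranges. *)
Definition same_set_distribution (R : realType)
  (d1 : measure_display) (T1 : measurableType d1) (P1 : probability T1 R)
  (X : nat -> T1 -> R)
  (d2 : measure_display) (T2 : measurableType d2) (P2 : probability T2 R)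
  (Y : nat -> T2 -> R) : Prop :=
  exists mu : probability (Rseq R * Rseq R)%type R,
    (forall A : set (Rseq R), measurable A ->
       mu (A `*` [set: Rseq R]) = P1 [set w | A (fun k => X k w)]) /\
    (forall A : set (Rseq R), measurable A ->
       mu ([set: Rseq R] `*` A) = P2 [set w | A (fun k => Y k w)]) /\
    (exists E : set (Rseq R * Rseq R)%type, measurable E /\
       E `<=` [set p | range p.1 = range p.2] /\ mu E = 1%E).

Definition indep_seqs (R : realType) (d : measure_display) (T : measurableType d)
  (P : probability T R) (n : nat) (Y : nat -> nat -> T -> R) : Prop :=
  forall A : nat -> set (Rseq R), (forall i, measurable (A i)) ->
    P (\bigcap_(i in `I_n) [set w | A i (fun j => Y i j w)]) =
    (\prod_(i < n) P [set w | A i (fun j => Y i j w)])%E.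

(* The independence condition.  Paper index i = 1..n corresponds to i = 0..n-1,
   paper j = 1,2,... to j = 0,1,...; the set {Y_{i,j}} is enumerated as the
   sequence k |-> Y (k mod n) (k div n). *)
Definition independence_condition (R : realType) (d : measure_display)
  (T : measurableType d) (P : probability T R) (X : nat -> T -> R) : Prop :=
  forall (n : nat) (a : nat -> R), (2 <= n)%N ->
    a 0%N = 0 -> a n = 1 -> (forall i, (i < n)%N -> a i < a i.+1) ->
    exists (d' : measure_display) (T' : measurableType d')
           (P' : probability T' R) (Y : nat -> nat -> T' -> R),
      (forall i j, measurable_fun [set: T'] (Y i j)) /\
      same_set_distribution P X P' (fun k => Y (k %% n)%N (k %/ n)%N) /\
      (forall i j, (i < n)%N -> {ae P', forall w, a i <= Y i j w < a i.+1}) /\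
      indep_seqs P' n Y.

Definition dense01 (R : realType) (S : set R) : Prop :=
  forall a b : R, 0 <= a -> a < b -> b <= 1 -> exists2 x, S x & a < x < b.

Definition lebesgue_null_tuple (R : realType) (n : nat) (B : set (n.-tuple R))
  : Prop :=
  forall eps : R, 0 < eps ->
    exists lo hi : nat -> 'I_n -> R,
      (forall k i, lo k i <= hi k i) /\
      (forall x, B x -> exists k, forall i, lo k i <= tnth x i <= hi k i) /\
      (forall N, \sum_(k < N) \prod_(i < n) (hi k i - lo k i) <= eps).

Definition joint_law_abs_cont (R : realType) (d : measure_display)
  (T : measurableType d) (P : probability T R) (X : nat -> T -> R) (n : nat)
  : Prop :=
  forall B : set (n.-tuple R), measurable B -> lebesgue_null_tuple B ->
    P [set w | B [tuple X i w | i < n]] = 0%E.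

(* Main.v *)
Require Import Defs.
From HB Require Import structures.
From mathcomp Require Import all_boot all_order all_algebra.
From mathcomp Require Import all_classical all_reals all_analysis.
From mathcomp Require Import measurable_realfun.
From mathcomp Require Import lra.
Import Order.TTheory GRing.Theory Num.Theory.
Local Open Scope classical_set_scope.
Local Open Scope ring_scope.
Set Implicit Arguments. Unset Strict Implicit. Unset Printing Implicit Defensive.

Section rseq.
Variable R : realType.

Lemma mcoord (k : nat) : measurable_fun [set: Rseq R] (fun x : Rseq R => x k).
Proof.
move=> _ A mA; apply: sub_sigma_algebra.
by exists k => //; exists A.
Qed.

Lemma mcoord_set (k : nat) (A : set R) : measurable A ->
  measurable [set x : Rseq R | A (x k)].
Proof. by move=> mA; rewrite -[X in measurable X]setTI; exact: mcoord. Qed.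

Lemma measurable_to_Rseq d (T : measurableType d) (f : nat -> T -> R) :
  (forall k, measurable_fun [set: T] (f k)) ->
  measurable_fun [set: T] (fun w => (fun k => f k w) : Rseq R).
Proof.
move=> mf; apply: (@measurability _ _ _ _ _ _
  (\bigcup_(k in [set: nat])
        preimage_set_system [set: Rseq R] (fun x : Rseq R => x k)
          (measurable : set (set R)))) => //.
move=> _ [_ [k _ [A mA <-]] <-].
rewrite setTI.
have -> : (fun w => (fun k => f k w) : Rseq R) @^-1` ([set: Rseq R] `&` (fun x : Rseq R => x k) @^-1` A)
  = [set: T] `&` f k @^-1` A.
  by rewrite !setTI.
exact: mf.
Qed.


Lemma measurable_ev d (T : measurableType d) (f : nat -> T -> R) (F : set (Rseq R)) :
  (forall k, measurable_fun [set: T] (f k)) -> measurable F ->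
  measurable [set w | F (fun k => f k w)].
Proof.
move=> mf mF; have := measurable_to_Rseq mf measurableT mF.
by rewrite setTI.
Qed.

Lemma measurable_tuple_fun d (T : measurableType d) (n : nat) (f : 'I_n -> T -> R) :
  (forall k, measurable_fun [set: T] (f k)) ->
  measurable_fun [set: T] (fun w => [tuple f k w | k < n]).
Proof.
move=> mf; apply/measurable_fun_tnthP => i.
rewrite (_ : _ \o _ = f i) //.
by apply: funext => w /=; rewrite tnth_mktuple.
Qed.

Lemma measurable_tuple_ev d (T : measurableType d) (n : nat) (f : 'I_n -> T -> R)
  (B : set (n.-tuple R)) :
  (forall k, measurable_fun [set: T] (f k)) -> measurable B ->
  measurable [set w | B [tuple f k w | k < n]].
Proof.
move=> mf mB; have := measurable_tuple_fun mf measurableT mB.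
by rewrite setTI.
Qed.

End rseq.

Lemma prob_setI_full d (T : measurableType d) (R : realType) (mu : probability T R)
  (A E : set T) : measurable A -> measurable E -> mu E = 1%E ->
  mu A = mu (A `&` E).
Proof.
move=> mA mE muE.
apply/eqP; rewrite eq_le; apply/andP; split; last first.
  by apply: le_measure => //; rewrite inE //; exact: measurableI.
have h : A `<=` (A `&` E) `|` ~` E.
  by move=> x Ax; have [Ex|nEx] := pselect (E x); [left|right].
apply: (le_trans (le_measure _ _ _ h)); rewrite ?inE //.
- apply: measurableU; first exact: measurableI.
  exact: measurableC.
- apply: (le_trans (measureU2 _ _ _)) => //; first exact: measurableI.
  exact: measurableC.
have hC : mu (~` E) = 0%E.
  have := @probability_setC _ _ _ mu _ mE.
  move=> ->; by rewrite muE subee.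
by rewrite -[X in (_ + X <= _)%E]/(mu (~` E)) hC adde0.
Qed.

Lemma transfer (R : realType)
  d1 (T1 : measurableType d1) (P1 : probability T1 R) (X : nat -> T1 -> R)
  d2 (T2 : measurableType d2) (P2 : probability T2 R) (Y : nat -> T2 -> R) :
  same_set_distribution P1 X P2 Y ->
  forall F : set (Rseq R), measurable F ->
  (forall x y : Rseq R, range x = range y -> F x -> F y) ->
  P1 [set w | F (fun k => X k w)] = P2 [set w | F (fun k => Y k w)].
Proof.
move=> [mu [h1 [h2 [E [mE [Erange muE]]]]]] F mF Finv.
rewrite -h1 // -h2 //.
rewrite (prob_setI_full (A := F `*` [set: Rseq R]) _ mE muE); last first.
  exact: measurableX.
rewrite [RHS](prob_setI_full (A := [set: Rseq R] `*` F) _ mE muE); last first.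
  exact: measurableX.
congr (mu _); apply/seteqP; split => -[x y] /= [[Hx Hy] Exy]; split => //; split => //.
- by apply: (Finv x y) => //; exact: (Erange _ Exy).
- by apply: (Finv y x) => //; have /= -> := Erange _ Exy.
Qed.

Section chargeR.
Variables (R : realType) (mu : {finite_measure set R -> \bar R}).
Definition chargeR : set (measurableTypeR R) -> \bar R := mu.
Let nu0 : chargeR set0 = 0%E. Proof. exact: measure0. Qed.
Let nu_finite S : measurable S -> chargeR S \is a fin_num.
Proof. move=> mS; exact: (@fin_num_measure _ R R mu S mS). Qed.
Let nu_sigma_additive : semi_sigma_additive chargeR.
Proof. exact: (@measure_semi_sigma_additive _ R R mu). Qed.
HB.instance Definition _ := isCharge.Build _ (measurableTypeR R) R chargeR
  nu0 nu_finite nu_sigma_additive.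
End chargeR.

Section density.
Variables (R : realType) (d : measure_display) (T : measurableType d).
Variables (P : probability T R) (Z : T -> R).
Hypothesis mZ : measurable_fun [set: T] Z.
Hypothesis ac : forall C : set R, measurable C -> lebesgue_measure C = 0%E ->
  P (Z @^-1` C) = 0%E.

Let mix := isMeasurableFun.Build _ _ _ _ Z mZ.
Let Zm : {mfun T >-> R} := HB.pack Z mix.
Let mu := distribution P Zm.
Let nu := chargeR mu.

Let nu_ac : nu `<< (@lebesgue_measure R).
Proof.
apply/null_content_dominatesP => A mA LA.
rewrite /nu /chargeR /mu /distribution /pushforward /=.
exact: ac.
Qed.

Definition dens : R -> R := fine \o @Radon_Nikodym _ (measurableTypeR R) R nu (@lebesgue_measure R).

Lemma measurable_dens : measurable_fun [set: R] dens.
Proof.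
have h := @measurable_int _ _ _ _ _ _ (Radon_Nikodym_integrable nu_ac).
exact: (measurableT_comp (fine_measurable measurableT) h).
Qed.

Lemma dens_bound (M lo hi : R) : 0 <= M -> lo <= hi ->
  (P (Z @^-1` (`[lo, hi] `&` [set x | (dens x <= M)%R])) <= (M * (hi - lo))%:E)%E.
Proof.
move=> M0 lohi.
set A := `[lo, hi] `&` _.
have mA : measurable A.
  apply: measurableI => //.
  have := measurable_dens measurableT (measurable_itv `]-oo, M]).
  rewrite setTI; congr measurable; apply/seteqP; split => x /=;
    by rewrite in_itv.
set f := @Radon_Nikodym _ (measurableTypeR R) R nu (@lebesgue_measure R).
have -> : P (Z @^-1` A) = (\int[@lebesgue_measure R]_(x in A) f x)%E.
  exact: (Radon_Nikodym_integral nu_ac mA).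
have intf : (@lebesgue_measure R).-integrable [set: measurableTypeR R] f.
  exact: Radon_Nikodym_integrable.
have intfA : (@lebesgue_measure R).-integrable A f.
  exact: integrableS intf.
apply: (@le_trans _ _ (\int[lebesgue_measure]_(x in A) (f^\+ x))%E).
  apply: le_integral => //; first exact: integrable_funepos.
  by move=> x _; rewrite funeposE le_max lexx.
apply: (@le_trans _ _ (\int[lebesgue_measure]_(x in A) (cst M%:E x))%E).
  apply: ge0_le_integral => //.
  - by apply: measurable_funepos; apply: measurable_int intfA.
  - move=> x [_ /= dx]; rewrite funeposE ge_max lee_fin M0 andbT.
    have fx : f x \is a fin_num by exact: Radon_Nikodym_fin_num.
    by rewrite -(fineK fx) lee_fin.
rewrite integral_cst //.
rewrite EFinM.
have -> : (hi - lo)%:E = lebesgue_measure [set` `[lo, hi]].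
  rewrite lebesgue_measure_itv /= lte_fin.
  move: lohi; rewrite le_eqVlt => /orP[/eqP <-|lh].
    by rewrite ltxx subrr.
  by rewrite lh EFinB.
apply: lee_wpmul2l; first by rewrite lee_fin.
apply: le_measure; rewrite ?inE //.
by move=> x [].
Qed.
End density.

Lemma measurable_forall_ord d (T : measurableType d) n (F : 'I_n -> set T) :
  (forall k, measurable (F k)) -> measurable [set w | forall k, F k w].
Proof.
move=> mF.
suff h : forall s : seq 'I_n, measurable [set w | forall k, k \in s -> F k w].
  have := h (enum 'I_n); congr measurable; apply/seteqP; split => w /= H k.
  - by apply: H; rewrite mem_enum.
  - by move=> _; apply: H.
elim => [|x s IH].
  by rewrite (_ : [set w | _] = setT) //; apply/seteqP; split => w //= _ k.
rewrite (_ : [set w | _] = F x `&` [set w | forall k, k \in s -> F k w]).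
  exact: measurableI.
apply/seteqP; split => w /=.
- by move=> H; split; [apply: H; rewrite mem_head|move=> k ks; apply: H; rewrite in_cons ks orbT].
- by move=> [Fx H] k; rewrite in_cons => /orP[/eqP->//|]; exact: H.
Qed.

Lemma measurable_exists_ord d (T : measurableType d) n (F : 'I_n -> set T) :
  (forall k, measurable (F k)) -> measurable [set w | exists k, F k w].
Proof.
move=> mF.
rewrite (_ : [set w | _] = ~` [set w | forall k, (~` F k) w]).
  by apply: measurableC; apply: measurable_forall_ord => k; exact: measurableC.
apply/seteqP; split => w /=.
- by move=> [k Fk] H; exact: (H k).
- by move=> H; apply: contrapT => H'; apply: H => k Fk; apply: H'; exists k.
Qed.

Lemma lee_prod_ge0 (R : realType) (I : Type) (s : seq I) (a b : I -> \bar R) :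
  (forall i, (0 <= a i)%E) -> (forall i, (a i <= b i)%E) ->
  (\prod_(i <- s) a i <= \prod_(i <- s) b i)%E.
Proof.
move=> a0 ab; elim: s => [|x s IH]; first by rewrite !big_nil.
rewrite !big_cons; apply: lee_pmul => //.
exact: prode_ge0.
Qed.

Lemma null_tuple_prob (R : realType) d (T : measurableType d) (P : probability T R)
  (n : nat) (Z : 'I_n -> T -> R) (mZ : forall k, measurable_fun [set: T] (Z k)) :
  (forall k (C : set R), measurable C -> lebesgue_measure C = 0%E ->
     P (Z k @^-1` C) = 0%E) ->
  (forall C : 'I_n -> set R, (forall k, measurable (C k)) ->
     P [set w | forall k, C k (Z k w)] = (\prod_(k < n) P (Z k @^-1` C k))%E) ->
  forall B : set (n.-tuple R), measurable B -> lebesgue_null_tuple B ->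
  P [set w | B [tuple Z k w | k < n]] = 0%E.
Proof.
move=> ac indep B mB nB.
pose f k := dens P (mZ k).
have mf k : measurable_fun setT (f k) := measurable_dens (mZ k) (ac k).
have mfZ k : measurable_fun setT (f k \o Z k) := measurableT_comp (mf k) (mZ k).
set EB := [set w | B _].
have mEB : measurable EB by exact: measurable_tuple_ev.
pose H (M : nat) := [set w | exists k, M%:R < f k (Z k w)].
have mH M : measurable (H M).
  apply: measurable_exists_ord => k.
  have := mfZ k measurableT _ (measurable_itv `]M%:R, +oo[).
  rewrite setTI; congr measurable; apply/seteqP; split => w /=;
    by rewrite in_itv /= andbT.
have step1 M : P (EB `&` ~` H M) = 0%E.
  set Mr : R := M%:R.
  have Mr0 : 0 <= Mr by rewrite /Mr ler0n.
  apply/eqP; rewrite eq_le measure_ge0 andbT.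
  apply/lee_addgt0Pr => e e0; rewrite add0e.
  pose eps := e / (Mr ^+ n + 1).
  have Mn1 : 0 < Mr ^+ n + 1 by rewrite ltr_wpDl // exprn_ge0.
  have eps0 : 0 < eps by rewrite divr_gt0.
  have [lo [hi [lohi [cov sumb]]]] := nB eps eps0.
  pose C m k := `[lo m k, hi m k] `&` [set x | f k x <= Mr].
  have mC m k : measurable (C m k).
    apply: measurableI => //.
    have := mf k measurableT _ (measurable_itv `]-oo, Mr]).
    rewrite setTI; congr measurable; apply/seteqP; split => x /=;
      by rewrite in_itv.
  pose Q m := [set w | forall k, C m k (Z k w)].
  have mQ m : measurable (Q m).
    apply: measurable_forall_ord => k.
    by have := mZ k measurableT _ (mC m k); rewrite setTI.
  have sub : EB `&` ~` H M `<=` \bigcup_m Q m.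
    move=> w [Bw nH]; have [m hm] := cov _ Bw; exists m => // k; split.
    - by have := hm k; rewrite tnth_mktuple /= in_itv.
    - rewrite /= leNgt; apply/negP => lt; apply: nH; exists k; exact: lt.
  have mEH : measurable (EB `&` ~` H M).
    by apply: measurableI => //; exact: measurableC.
  apply: (le_trans (measure_sigma_subadditive _ mQ mEH sub)).
  apply: (@le_trans _ _ (\sum_(m <oo) ((Mr ^+ n * \prod_(k < n) (hi m k - lo m k))%:E))%E).
    apply: lee_nneseries => [m _ _|m _]; first exact: measure_ge0.
    have hI := indep (C m) (mC m).
    apply: (@le_trans _ _ (\prod_(k < n) P (Z k @^-1` C m k))%E).
      by rewrite -hI.
    apply: (@le_trans _ _ (\prod_(k < n) (Mr * (hi m k - lo m k))%:E)%E).
      apply: lee_prod_ge0 => k; first exact: measure_ge0.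
      exact: (dens_bound (mZ k) (ac k) Mr0 (lohi m k)).
    by rewrite prodEFin big_split /= prodr_const card_ord.
  have term0 m : 0 <= Mr ^+ n * \prod_(k < n) (hi m k - lo m k).
    by rewrite mulr_ge0 ?exprn_ge0 // prodr_ge0 // => k _; rewrite subr_ge0.
  apply: lime_le.
    by apply: is_cvg_nneseries => m _ _; rewrite lee_fin.
  apply: nearW => N.
  rewrite sumEFin lee_fin -mulr_sumr.
  apply: (le_trans (ler_wpM2l (exprn_ge0 _ Mr0) _)).
    by rewrite big_mkord; exact: sumb.
  have -> : eps = e / (Mr ^+ n + 1) by [].
  rewrite mulrCA ger_pMr // ler_pdivrMr // mul1r.
  by rewrite lerDl.
have step2 M : (P EB <= P (H M))%E.
  have sub : EB `<=` (EB `&` ~` H M) `|` H M.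
    by move=> w Bw; have [Hw|nHw] := pselect (H M w); [right|left].
  apply: (le_trans (le_measure _ _ _ sub)); rewrite ?inE //.
    by apply: measurableU => //; apply: measurableI => //; exact: measurableC.
  apply: (le_trans (measureU2 _ _ _)) => //.
    by apply: measurableI => //; exact: measurableC.
  by rewrite -[X in (X + _ <= _)%E]/(P (EB `&` ~` H M)) step1 add0e.
have capH : \bigcap_M H M = set0.
  apply/seteqP; split => // w /= hw.
  pose s := \sum_(k < n) `|f k (Z k w)|.
  have [k hk] := hw (Num.trunc s).+1 I.
  have : f k (Z k w) <= s.
    apply: (le_trans (ler_norm _)).
    rewrite /s (bigD1 k) //= lerDl.
    by apply: sumr_ge0 => i _.
  have := truncnS_gt s.
  move=> h1 h2; move: hk; rewrite ltNge => /negP; apply.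
  exact: (le_trans h2 (ltW h1)).
have cvgH : (P \o H) @ \oo --> (0%E : \bar R).
  rewrite -(measure0 P) -capH.
  apply: nonincreasing_cvg_mu => //.
  - by apply: (le_lt_trans (probability_le1 P (mH 0%N))); exact: ltey.
  - exact: bigcap_measurableType.
  - apply/nonincreasing_seqP => M; apply/subsetPset => w [k hk]; exists k.
    by apply: le_lt_trans hk; rewrite ler_nat.
apply/eqP; rewrite eq_le measure_ge0 andbT.
rewrite -(cvg_lim _ cvgH) //.
apply: lime_ge; first by apply/cvg_ex; exists 0%E.
exact: nearW.
Qed.

Lemma indep_sub (R : realType) d (T : measurableType d) (P : probability T R)
  (m n : nat) (Y : nat -> nat -> T -> R)
  (mY : forall i j, measurable_fun [set: T] (Y i j)) :
  indep_seqs P m Y ->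
  forall (s : 'I_n -> nat), injective s -> (forall k, (s k < m)%N) ->
  forall (jj : 'I_n -> nat) (C : 'I_n -> set R), (forall k, measurable (C k)) ->
  P [set w | forall k, C k (Y (s k) (jj k) w)] =
  (\prod_(k < n) P (Y (s k) (jj k) @^-1` C k))%E.
Proof.
move=> ind s sinj sm jj C mC.
pose A (i : nat) := [set y : Rseq R | forall k, s k = i -> C k (y (jj k))].
have mA i : measurable (A i).
  rewrite (_ : A i = [set y : Rseq R | forall k,
      (if s k == i then [set y : Rseq R | C k (y (jj k))] else setT) y]).
    apply: (measurable_forall_ord (F := fun k =>
      if s k == i then [set y : Rseq R | C k (y (jj k))] else setT)) => k.
    by case: eqP => _ //; exact: mcoord_set.
  apply/seteqP; split => y /= H k.
  - by case: eqP => // /H.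
  - by move=> ski; have := H k; rewrite ski eqxx.
have := ind A mA.
rewrite (_ : \bigcap_(i in `I_m) _ = [set w | forall k, C k (Y (s k) (jj k) w)]).
  move=> ->.
  pose s' (k : 'I_n) : 'I_m := Ordinal (sm k).
  rewrite (partition_big s' xpredT) //=.
  apply: eq_bigr => i _.
  have [[k0 sk0]|nok] := pselect (exists k0, s' k0 = i).
  - rewrite (big_pred1 k0); last first.
      move=> k /=; apply/eqP/eqP => [ski|->//].
      by apply: sinj; move: ski; rewrite -sk0 => /(congr1 val).
    have e : s k0 = i := congr1 val sk0.
    congr (P _); apply/seteqP; split => w /=.
    + by move=> H; have := H k0 e; rewrite e.
    + move=> Cw k ski; have kk : k = k0 by apply: sinj; rewrite ski e.
      by subst k; rewrite -ski.
  - rewrite big_pred0; last first.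
      by move=> k /=; apply/negP => /eqP ski; apply: nok; exists k.
    rewrite (_ : [set w | _] = setT) ?probability_setT //.
    apply/seteqP; split => // w _ k ski; exfalso; apply: nok; exists k.
    by apply: val_inj.
apply/seteqP; split => w /=.
- by move=> H k; exact: (H (s k) (sm k) k erefl).
- by move=> H i _ k <-; exact: H.
Qed.

Definition cell (R : realType) (m c : nat) (x : R) : Prop :=
  c%:R / m%:R <= x < c.+1%:R / m%:R.

Lemma cell_uniq (R : realType) (m c c' : nat) (x : R) : (0 < m)%N ->
  cell m c x -> cell m c' x -> c = c'.
Proof.
move=> m0 /andP[h1 h2] /andP[h3 h4].
have mp : 0 < (m%:R : R)^-1 by rewrite invr_gt0 ltr0n.
have lt1 : c%:R / m%:R < c'.+1%:R / (m%:R : R) by exact: le_lt_trans h1 h4.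
have lt2 : c'%:R / m%:R < c.+1%:R / (m%:R : R) by exact: le_lt_trans h3 h2.
rewrite ltr_pM2r // ltr_nat ltnS in lt1.
rewrite ltr_pM2r // ltr_nat ltnS in lt2.
by apply/eqP; rewrite eqn_leq lt1 lt2.
Qed.

Lemma grid_exists (R : realType) (n : nat) (x : 'I_n -> R) :
  (forall k, 0 < x k < 1) -> injective x ->
  exists m : nat, exists c : 'I_n -> nat,
    [/\ (2 <= m)%N, injective c, (forall k, (c k < m)%N) &
        forall k, cell m (c k) (x k)].
Proof.
move=> x01 xinj.
pose m := (\sum_(k < n) \sum_(l < n) Num.trunc ((`|x k - x l|)^-1 : R)%R)%N.+2.
have m0 : (0 < m)%N by [].
have mR0 : 0 < (m%:R : R) by rewrite ltr0n.
have gap k l : k != l -> 1 < m%:R * `|x k - x l|.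
  move=> kl.
  have d0 : 0 < `|x k - x l|.
    rewrite normr_gt0 subr_eq0; apply/eqP => /xinj /eqP; exact/negP.
  rewrite -ltr_pdivrMr // mul1r.
  apply: (lt_le_trans (truncnS_gt _)).
  rewrite ler_nat /m ltnS (leq_trans _ (leqnSn _)) //.
  rewrite (bigD1 k) //= (bigD1 l) //= -addnA leq_addr //.
pose c k := Num.trunc (m%:R * x k).
have cle k : (c k)%:R <= m%:R * x k.
  rewrite truncn_le mulr_ge0 // ?ler0n //; case/andP: (x01 k) => /ltW //.
have cgt k : m%:R * x k < (c k).+1%:R by exact: truncnS_gt.
exists m, c; split => //.
- move=> k l ckl; apply/eqP; apply: contraT => kl.
  have := gap k l kl.
  rewrite -{1}(ger0_norm (ltW mR0)) -normrM mulrBr.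
  have h1 := cle k; have h2 := cgt k; have h3 := cle l; have h4 := cgt l.
  rewrite ckl in h1 h2.
  rewrite ltNge => /negP H; exfalso; apply: H.
  rewrite -natr1 in h2 h4.
  rewrite ler_norml; apply/andP; split; lra.
- move=> k; rewrite -ltnS.
  have : m%:R * x k < m%:R.
    case/andP: (x01 k) => _ h.
    by rewrite -{2}(mulr1 (m%:R)) ltr_pM2l.
  move=> h; have := le_lt_trans (cle k) h.
  by rewrite ltr_nat ltnS.
- move=> k; apply/andP; split.
  + by rewrite ler_pdivrMr // mulrC.
  + by rewrite ltr_pdivlMr // mulrC.
Qed.

Lemma ac_Y (R : realType) d (T : measurableType d) (P : probability T R)
  (X : nat -> T -> R) (mX : forall k, measurable_fun [set: T] (X k))
  (X01 : forall k w, 0 < X k w < 1)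
  (nullh : forall B : set R, measurable B -> B `<=` `]0, 1[ ->
     lebesgue_measure B = 0%E -> {ae P, forall w, forall k, ~ B (X k w)})
  d' (T' : measurableType d') (P' : probability T' R) (m : nat)
  (Y : nat -> nat -> T' -> R) (mY : forall i j, measurable_fun [set: T'] (Y i j)) :
  same_set_distribution P X P' (fun k => Y (k %% m)%N (k %/ m)%N) ->
  forall i j, (i < m)%N -> forall C : set R, measurable C ->
  lebesgue_measure C = 0%E -> P' (Y i j @^-1` C) = 0%E.
Proof.
move=> same i j im C mC C0.
pose F := \bigcup_k [set x : Rseq R | C (x k)].
have mF : measurable F.
  by apply: bigcupT_measurable => k; exact: mcoord_set.
have inv : forall x y : Rseq R, range x = range y -> F x -> F y.
  move=> x y rxy [k _ Ck].
  have : range y (x k) by rewrite -rxy; exists k.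
  by move=> [k' _ yk]; exists k' => //=; rewrite yk.
have := transfer same mF inv.
have h0 : P [set w | F (fun k => X k w)] = 0%E.
  apply/negligibleP; first exact: measurable_ev.
  have h : {ae P, forall w, forall k, ~ (C `&` `]0, 1[) (X k w)}.
    apply: nullh.
    - exact: (measurableI _ _ mC (measurable_itv _)).
    - exact: subIsetr.
    - apply/eqP; rewrite -measure_le0 -C0; apply: le_measure; rewrite ?inE //.
    exact: (measurableI _ _ mC (measurable_itv _)).
  apply: (negligibleS _ h).
  by move=> w [k _ Ck] H; apply: (H k); split => //=; rewrite in_itv /=; exact: X01.
rewrite h0 => /esym h1.
apply/eqP; rewrite -measure_le0 -h1; apply: le_measure; rewrite ?inE.
- by have := mY i j measurableT _ mC; rewrite setTI.
- by apply: measurable_ev.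
move=> w /= Cw; exists (i + j * m)%N => //=.
have mp : (0 < m)%N by exact: leq_ltn_trans im.
by rewrite addnC modnMDl modn_small // divnMDl // divn_small // addn0.
Qed.

Lemma cell_neg (R : realType) d (T : measurableType d) (P : probability T R)
  (X : nat -> T -> R) (mX : forall k, measurable_fun [set: T] (X k))
  (X01 : forall k w, 0 < X k w < 1)
  (nullh : forall B : set R, measurable B -> B `<=` `]0, 1[ ->
     lebesgue_measure B = 0%E -> {ae P, forall w, forall k, ~ B (X k w)})
  (ic : independence_condition P X)
  (n m : nat) (m2 : (2 <= m)%N) (c : 'I_n -> nat) (cinj : injective c)
  (cm : forall k, (c k < m)%N)
  (B : set (n.-tuple R)) (mB : measurable B) (nB : lebesgue_null_tuple B) :
  P.-negligible [set w | B [tuple X k w | k < n] /\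
                         forall k : 'I_n, cell m (c k) (X k w)].
Proof.
have m0 : (0 < m)%N by exact: leq_trans m2.
have mR0 : 0 < (m%:R : R) by rewrite ltr0n.
pose a := fun i : nat => i%:R / m%:R : R.
have a0 : a 0%N = 0 by rewrite /a mul0r.
have am : a m = 1 by rewrite /a divff // gt_eqF.
have ainc : forall i, (i < m)%N -> a i < a i.+1.
  by move=> i _; rewrite /a ltr_pM2r ?invr_gt0 // ltr_nat.
have [d' [T' [P' [Y [mY [same [ae ind]]]]]]] := ic m a m2 a0 am ainc.
pose Ft (t : n.-tuple nat) := [set x : Rseq R | B [tuple x (tnth t k) | k < n] /\
   forall k, cell m (c k) (x (tnth t k))].
have mFt t : measurable (Ft t).
  apply: measurableI.
  - apply: (measurable_tuple_ev (f := fun k (x : Rseq R) => x (tnth t k))) => //.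
    by move=> k; exact: mcoord.
  - apply: (measurable_forall_ord
      (F := fun k => [set x : Rseq R | cell m (c k) (x (tnth t k))])) => k.
    rewrite (_ : [set x : Rseq R | _] =
       [set x : Rseq R | [set` `[a (c k), a (c k).+1[] (x (tnth t k))]).
      by apply: mcoord_set; exact: measurable_itv.
    by apply/seteqP; split => x /=; rewrite in_itv.
pose G (p : nat) := match unpickle p : option (n.-tuple nat) with
  | Some t => Ft t | None => set0 end.
pose F := [set x : Rseq R | exists j : 'I_n -> nat,
  B [tuple x (j k) | k < n] /\ forall k, cell m (c k) (x (j k))].
have FE : F = \bigcup_p G p.
  apply/seteqP; split => x /=.
  - move=> [j [Bj cj]]; exists (pickle [tuple j k | k < n]) => //.
    rewrite /G pickleK /Ft; split.
    + suff -> : [tuple x (tnth [tuple j k | k < n] k) | k < n] =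
                [tuple x (j k) | k < n] by [].
      by apply: eq_mktuple => k; rewrite tnth_mktuple.
    + by move=> k; rewrite tnth_mktuple.
  - move=> [p _]; rewrite /G; case: (unpickle p) => // t [Bt ct].
    by exists (tnth t).
have mF : measurable F.
  rewrite FE; apply: bigcupT_measurable => p; rewrite /G.
  by case: (unpickle p).
have inv : forall x y : Rseq R, range x = range y -> F x -> F y.
  move=> x y rxy [j [Bj cj]].
  have h : forall k : 'I_n, exists j', y j' = x (j k).
    move=> k; have : range y (x (j k)) by rewrite -rxy; exists (j k).
    by move=> [j' _ yj']; exists j'.
  have [j' hj'] := boolp.choice h.
  exists j'; split.
  - suff -> : [tuple y (j' k) | k < n] = [tuple x (j k) | k < n] by [].
    by apply: eq_mktuple => k; rewrite hj'.
  - by move=> k; rewrite hj'.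
have sub : [set w | B [tuple X k w | k < n] /\ forall k : 'I_n, cell m (c k) (X k w)]
    `<=` [set w | F (fun k => X k w)].
  by move=> w [Bw cw]; exists (fun k : 'I_n => (k : nat)).
apply: (negligibleS sub).
apply/negligibleP; first exact: measurable_ev.
apply: (eq_trans (transfer same mF inv)).
apply/negligibleP; first exact: (measurable_ev (fun k => mY (k %% m)%N (k %/ m)%N) mF).
rewrite FE.
have -> : [set w | (\bigcup_p G p) (fun k => Y (k %% m)%N (k %/ m)%N w)] =
   \bigcup_p [set w | G p (fun k => Y (k %% m)%N (k %/ m)%N w)].
  by apply/seteqP; split => w /= [p _ h]; exists p.
apply: negligible_bigcup => p; rewrite /G.
case: (unpickle p) => [t|]; last first.
  by apply: (negligibleS _ (negligible_set0 _)).
have [hc|nhc] := pselect (forall k, (tnth t k %% m)%N = c k).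
- pose Z (k : 'I_n) := Y (c k) (tnth t k %/ m)%N.
  have mZ k : measurable_fun [set: T'] (Z k) by exact: mY.
  have h0 : P' [set w | B [tuple Z k w | k < n]] = 0%E.
    apply: null_tuple_prob => //.
    + move=> k C mC C0; rewrite /Z.
      exact: (ac_Y mX X01 nullh mY same (tnth t k %/ m)%N (cm k) mC C0).
    + by move=> C mC; apply: (indep_sub mY ind cinj cm).
  apply: (negligibleS _ (proj2 (negligibleP _ _) h0)); last first.
    exact: measurable_tuple_ev.
  move=> w /= [Bw _].
  suff <- : [tuple Y (tnth t k %% m)%N (tnth t k %/ m)%N w | k < n] =
     [tuple Z k w | k < n] by [].
  by apply: eq_mktuple => k; rewrite /Z hc.
- have [k hk] : exists k, (tnth t k %% m)%N <> c k.
    by apply: contrapT => H; apply: nhc => k; apply: contrapT => H'; apply: H; exists k.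
  set i := (tnth t k %% m)%N; set jj := (tnth t k %/ m)%N.
  have im : (i < m)%N by rewrite ltn_pmod.
  have aei := ae i jj im.
  apply: (negligibleS _ aei) => w /= [_ cw] hw.
  apply: hk; apply/esym; apply: (cell_uniq m0 (cw k)).
  exact: hw.
Qed.

Unset Implicit Arguments. Set Strict Implicit. Set Printing Implicit Defensive.

Theorem lemma5p10 (R : realType) (d : measure_display) (T : measurableType d)
  (P : probability T R) (X : nat -> T -> R) :
  (forall k, measurable_fun [set: T] (X k)) ->
  (forall k w, 0 < X k w < 1) ->
  {ae P, forall w, dense01 (range (fun k => X k w))} ->
  independence_condition P X ->
  (forall B : set R, measurable B -> B `<=` `]0, 1[ ->
     lebesgue_measure B = 0%E ->
     {ae P, forall w, forall k, ~ B (X k w)}) ->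
  (forall k l : nat, k <> l -> P [set w | X k w = X l w] = 0%E) ->
  forall n : nat, joint_law_abs_cont P X n.
Proof.
move=> mX X01 _ ic nullh dist n B mB nB.
have mEB : measurable [set w | B [tuple X i w | i < n]].
  exact: (measurable_tuple_ev (f := fun (i : 'I_n) => X i)).
apply/negligibleP; first exact: mEB.
pose Nd := \bigcup_k \bigcup_l [set w | k <> l /\ X k w = X l w].
have nNd : P.-negligible Nd.
  apply: negligible_bigcup => k; apply: negligible_bigcup => l.
  have [kl|nkl] := eqVneq k l.
    by apply: (negligibleS _ (negligible_set0 P)) => w [].
  have meq : measurable [set w | X k w = X l w].
    have := measurable_funB (mX k) (mX l) measurableT (measurable_set1 0).
    rewrite setTI; congr measurable; apply/seteqP; split => w /=.
    - by move/eqP; rewrite subr_eq0 => /eqP.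
    - by move=> ->; rewrite subrr.
  have h0 : P.-negligible [set w | X k w = X l w].
    apply/negligibleP; first exact: meq.
    by apply: dist; apply/eqP.
  by apply: (negligibleS _ h0) => w [].
pose Gp (p : nat) := match unpickle p : option (nat * n.-tuple nat) with
  | Some (m, t) =>
      if pselect ((2 <= m)%N /\ injective (tnth t) /\ forall k, (tnth t k < m)%N)
      is left _ then [set w | B [tuple X k w | k < n] /\
                       forall k : 'I_n, cell m (tnth t k) (X k w)]
      else set0
  | None => set0 end.
have nG : forall p, P.-negligible (Gp p).
  move=> p; rewrite /Gp; case: (unpickle p) => [[m t]|]; last first.
    exact: negligible_set0.
  case: pselect => [[m2 [tinj tm]]|_]; last exact: negligible_set0.
  exact: (cell_neg mX X01 nullh ic m2 tinj tm mB nB).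
apply: (negligibleS _ (negligibleU nNd (negligible_bigcup nG))).
move=> w Bw; have [Ndw|nNdw] := pselect (Nd w); first by left.
right.
have xinj : injective (fun k : 'I_n => X k w).
  move=> k l /= e; apply: val_inj; apply: contrapT => nkl; apply: nNdw.
  by exists k => //; exists l.
have [m [c [m2 cinj cm cellc]]] := grid_exists (x := fun k : 'I_n => X k w)
  (fun k => X01 k w) xinj.
exists (pickle (m, [tuple c k | k < n])) => //.
rewrite /Gp pickleK; case: pselect => [_|nv].
  by split => // k; rewrite tnth_mktuple; exact: cellc.
exfalso; apply: nv; split => //; split.
- by move=> k l; rewrite !tnth_mktuple; exact: cinj.
- by move=> k; rewrite tnth_mktuple.
Qed.
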